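(* Let $E$ be a contact Riemannian Lie algebroid with associated almost contact Riemannian structure $(F_E,\xi,\eta,g_E)$ and Levi-Civita connection $\nabla$ of $g_E$. Then $E$ is $K$-contact (i.e. $\xi$ is a Killing section) if and only if $\nabla_s\xi=-F_E(s)$ for every $s\in\Gamma(E)$.
   Context: A Lie algebroid $(E,\rho_E,[\cdot,\cdot]_E)$ over $M$ is a vector bundle with anchor $\rho_E:E\to TM$ and Lie bracket on $\Gamma(E)$ with $[s_1,fs_2]_E=f[s_1,s_2]_E+\rho_E(s_1)(f)s_2$. For a 1-form $\eta$, $(d_E\eta)(s_1,s_2)=\frac12\{\rho_E(s_1)(\eta(s_2))-\rho_E(s_2)(\eta(s_1))-\eta([s_1,s_2]_E)\}$. For $E$ of rank $2m+1$, an almost contact Riemannian structure $(F_E,\xi,\eta,g_E)$: endomorphism $F_E$, $\xi\in\Gamma(E)$, $\eta\in\Gamma(E^* )$, bundle metric $g_E$ with $F_E^2=-I_E+\eta\otimes\xi$, $\eta(\xi)=1$, $g_E(F_Es_1,F_Es_2)=g_E(s_1,s_2)-\eta(s_1)\eta(s_2)$; fundamental form $\Omega_E(s_1,s_2)=g_E(s_1,F_Es_2)$. $E$ is contact Riemannian if also $\eta\wedge(d_E\eta)^m$ vanishes nowhere and $d_E\eta=\Omega_E$. $\xi$ is Killing if $\rho_E(\xi)(g_E(s_1,s_2))-g_E([\xi,s_1]_E,s_2)-g_E(s_1,[\xi,s_2]_E)=0$ for all $s_1,s_2$; a contact Riemannian Lie algebroid with Killing $\xi$ is called $K$-contact. The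 Levi-Civita connection $\nabla$ is the unique $E$-connection ($\nabla_{fs}s'=f\nabla_ss'$, $\nabla_s(fs')=f\nabla_ss'+\rho_E(s)(f)s'$) that is torsion-free ($\nabla_{s_1}s_2-\nabla_{s_2}s_1=[s_1,s_2]_E$) and metric ($\rho_E(s)(g_E(s_1,s_2))=g_E(\nabla_ss_1,s_2)+g_E(s_1,\nabla_ss_2)$). *)

(* Defs.v *)
(* Lie algebroids modelled concretely, pointwise:
   points M, fibres identified (set-theoretically) with 'rV[R]_n,
   smooth functions = a predicate A on M -> R, smooth sections Gamma(E)
   = a predicate G on M -> 'rV[R]_n. *)
From HB Require Import structures.
From mathcomp Require Import all_boot all_order all_algebra all_fingroup.
From mathcomp Require Import reals.
Set Implicit Arguments. Unset Strict Implicit. Unset Printing Implicit Defensive.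
Import GRing.Theory Num.Theory.
Local Open Scope ring_scope.

Section Defs.
Variables (R : realType) (M : Type) (n : nat).
Notation fn := (M -> R).
Notation sec := (M -> 'rV[R]_n).

Definition cstf (c : R) : fn := fun _ => c.
Definition addf (f h : fn) : fn := fun x => f x + h x.
Definition mulf (f h : fn) : fn := fun x => f x * h x.
Definition zsec : sec := fun _ => 0.
Definition adds (s t : sec) : sec := fun x => s x + t x.
Definition scales (f : fn) (s : sec) : sec := fun x => f x *: s x.

Definition FE (F : M -> 'M[R]_n) (s : sec) : sec := fun x => s x *m F x.
Definition etaE (eta : M -> 'cV[R]_n) (s : sec) : fn := fun x => (s x *m eta x) 0 0.
Definition gE (g : M -> 'M[R]_n) (s t : sec) : fn :=
  fun x => (s x *m g x *m (t x)^T) 0 0.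

(* A = C^oo(M) (a subalgebra of M -> R containing constants),
   G = Gamma(E) (an A-module of sections spanning every fibre) *)
Record vector_bundle (A : fn -> Prop) (G : sec -> Prop) : Prop := {
  vb_cst : forall c, A (cstf c);
  vb_addf : forall f h, A f -> A h -> A (addf f h);
  vb_mulf : forall f h, A f -> A h -> A (mulf f h);
  vb_oppf : forall f, A f -> A (fun x => - f x);
  vb_zero : G zsec;
  vb_adds : forall s t, G s -> G t -> G (adds s t);
  vb_scales : forall f s, A f -> G s -> G (scales f s);
  vb_span : forall (x : M) (v : 'rV[R]_n), exists s, G s /\ s x = v }.

Record lie_algebroid (A : fn -> Prop) (G : sec -> Prop)
    (rho : sec -> fn -> fn) (br : sec -> sec -> sec) : Prop := {
  la_vb : vector_bundle A G;
  (* anchor: bundle map E -> TM, vector fields acting as derivations *)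
  la_rho_A : forall s f, G s -> A f -> A (rho s f);
  la_rho_add : forall s t f, G s -> G t -> A f ->
      rho (adds s t) f = addf (rho s f) (rho t f);
  la_rho_scale : forall h s f, A h -> G s -> A f ->
      rho (scales h s) f = mulf h (rho s f);
  la_der_add : forall s f h, G s -> A f -> A h ->
      rho s (addf f h) = addf (rho s f) (rho s h);
  la_der_cst : forall s c f, G s -> A f ->
      rho s (mulf (cstf c) f) = mulf (cstf c) (rho s f);
  la_der_mul : forall s f h, G s -> A f -> A h ->
      rho s (mulf f h) = addf (mulf f (rho s h)) (mulf h (rho s f));
  la_br_G : forall s t, G s -> G t -> G (br s t);
  la_br_add : forall s t u, G s -> G t -> G u ->
      br (adds s t) u = adds (br s u) (br t u);
  la_br_cst : forall c s t, G s -> G t ->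
      br (scales (cstf c) s) t = scales (cstf c) (br s t);
  la_br_skew : forall s t, G s -> G t -> br s t = scales (cstf (-1)) (br t s);
  la_br_jacobi : forall s t u, G s -> G t -> G u ->
      adds (br s (br t u)) (adds (br t (br u s)) (br u (br s t))) = zsec;
  la_leibniz : forall s1 s2 f, G s1 -> G s2 -> A f ->
      br s1 (scales f s2) = adds (scales f (br s1 s2)) (scales (rho s1 f) s2) }.

Definition dE (rho : sec -> fn -> fn) (br : sec -> sec -> sec)
    (eta : M -> 'cV[R]_n) (s1 s2 : sec) : fn :=
  fun x => 2^-1 * (rho s1 (etaE eta s2) x - rho s2 (etaE eta s1) x
                    - etaE eta (br s1 s2) x).

Definition OmegaE (F : M -> 'M[R]_n) (g : M -> 'M[R]_n) (s1 s2 : sec) : fn :=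
  gE g s1 (FE F s2).

Record almost_contact_riemannian (A : fn -> Prop) (G : sec -> Prop)
    (F : M -> 'M[R]_n) (xi : sec) (eta : M -> 'cV[R]_n) (g : M -> 'M[R]_n)
    : Prop := {
  ac_F_G : forall s, G s -> G (FE F s);
  ac_xi_G : G xi;
  ac_eta_A : forall s, G s -> A (etaE eta s);
  ac_g_A : forall s t, G s -> G t -> A (gE g s t);
  ac_g_sym : forall x, (g x)^T = g x;
  ac_g_pos : forall x (v : 'rV[R]_n), v != 0 -> 0 < (v *m g x *m v^T) 0 0;
  ac_F2 : forall s, G s ->
      FE F (FE F s) = adds (scales (cstf (-1)) s) (scales (etaE eta s) xi);
  ac_eta_xi : etaE eta xi = cstf 1;
  ac_g_F : forall s1 s2, G s1 -> G s2 ->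
      gE g (FE F s1) (FE F s2)
      = fun x => gE g s1 s2 x - etaE eta s1 x * etaE eta s2 x }.

End Defs.

Section Contact.
Variables (R : realType) (M : Type) (m : nat).
Notation n := (m.*2.+1).
Notation sec := (M -> 'rV[R]_n).

(* value at x of eta /\ (d_E eta)^m on s_0, ..., s_{2m}
   (up to a positive normalisation constant, irrelevant for vanishing) *)
Definition eta_wedge_deta (rho : sec -> (M -> R) -> (M -> R))
    (br : sec -> sec -> sec) (eta : M -> 'cV[R]_n) (s : 'I_n -> sec) (x : M) : R :=
  \sum_(sg : 'S_n)
    (-1) ^+ odd_perm sg * etaE eta (s (sg ord0)) x *
    \prod_(i < m) dE rho br eta (s (sg (inord i.*2.+1))) (s (sg (inord i.*2.+2))) x.

Record contact_riemannian (A : (M -> R) -> Prop) (G : sec -> Prop)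
    (rho : sec -> (M -> R) -> (M -> R)) (br : sec -> sec -> sec)
    (F : M -> 'M[R]_n) (xi : sec) (eta : M -> 'cV[R]_n) (g : M -> 'M[R]_n)
    : Prop := {
  cr_lie : lie_algebroid A G rho br;
  cr_acr : almost_contact_riemannian A G F xi eta g;
  cr_nowhere : forall x : M, exists s : 'I_n -> sec,
      (forall i, G (s i)) /\ eta_wedge_deta rho br eta s x != 0;
  cr_deta : forall s1 s2, G s1 -> G s2 ->
      dE rho br eta s1 s2 = OmegaE F g s1 s2 }.
End Contact.

Section Conn.
Variables (R : realType) (M : Type) (n : nat).
Notation sec := (M -> 'rV[R]_n).

Record levi_civita (A : (M -> R) -> Prop) (G : sec -> Prop)
    (rho : sec -> (M -> R) -> (M -> R)) (br : sec -> sec -> sec)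
    (g : M -> 'M[R]_n) (nabla : sec -> sec -> sec) : Prop := {
  lc_G : forall s t, G s -> G t -> G (nabla s t);
  lc_add1 : forall s s' t, G s -> G s' -> G t ->
      nabla (adds s s') t = adds (nabla s t) (nabla s' t);
  lc_lin1 : forall f s t, A f -> G s -> G t ->
      nabla (scales f s) t = scales f (nabla s t);
  lc_add2 : forall s t t', G s -> G t -> G t' ->
      nabla s (adds t t') = adds (nabla s t) (nabla s t');
  lc_leib2 : forall f s t, A f -> G s -> G t ->
      nabla s (scales f t) = adds (scales f (nabla s t)) (scales (rho s f) t);
  lc_torsion : forall s1 s2, G s1 -> G s2 ->
      adds (nabla s1 s2) (scales (cstf (-1)) (nabla s2 s1)) = br s1 s2;
  lc_metric : forall s s1 s2, G s -> G s1 -> G s2 ->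
      rho s (gE g s1 s2) = addf (gE g (nabla s s1) s2) (gE g s1 (nabla s s2)) }.

Definition killing (G : sec -> Prop) (rho : sec -> (M -> R) -> (M -> R))
    (br : sec -> sec -> sec) (g : M -> 'M[R]_n) (xi : sec) : Prop :=
  forall s1 s2, G s1 -> G s2 ->
    forall x, rho xi (gE g s1 s2) x - gE g (br xi s1) s2 x - gE g s1 (br xi s2) x = 0.
End Conn.

(* Main.v *)
Require Import Defs.
From mathcomp Require Import all_boot all_order all_algebra all_fingroup.
From mathcomp Require Import reals.
From mathcomp Require Import ring lra.
From Stdlib Require Import FunctionalExtensionality.
Set Implicit Arguments.
Import Order.TTheory GRing.Theory Num.Theory.
Local Open Scope ring_scope.

Section H.
Variables (R : realType) (n : nat).
Definition Bf (g : 'M[R]_n) (v w : 'rV[R]_n) : R := (v *m g *m w^T) 0 0.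
Lemma BfDl g u v w : Bf g (u + v) w = Bf g u w + Bf g v w.
Proof. by rewrite /Bf !mulmxDl mxE. Qed.
Lemma BfZl g c v w : Bf g (c *: v) w = c * Bf g v w.
Proof. by rewrite /Bf -!scalemxAl mxE. Qed.
Lemma Bfsym g : g^T = g -> forall v w, Bf g v w = Bf g w v.
Proof.
move=> hg v w; rewrite /Bf.
have h : forall B : 'M[R]_1, B 0 0 = B^T 0 0 by move=> B; rewrite mxE.
by rewrite [RHS]h !trmx_mul trmxK hg mulmxA.
Qed.
Lemma BfNl g v w : Bf g (- v) w = - Bf g v w.
Proof. by rewrite -scaleN1r BfZl mulN1r. Qed.
Lemma Bf0r g v : Bf g v 0 = 0.
Proof. by rewrite /Bf trmx0 mulmx0 mxE. Qed.
End H.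
Arguments Bf {R n}.

Theorem proposition4p6 (R : realType) (M : Type) (m : nat)
    (A : (M -> R) -> Prop) (G : (M -> 'rV[R]_(m.*2.+1)) -> Prop)
    (rho : (M -> 'rV[R]_(m.*2.+1)) -> (M -> R) -> (M -> R))
    (br : (M -> 'rV[R]_(m.*2.+1)) -> (M -> 'rV[R]_(m.*2.+1)) -> (M -> 'rV[R]_(m.*2.+1)))
    (F : M -> 'M[R]_(m.*2.+1)) (xi : M -> 'rV[R]_(m.*2.+1))
    (eta : M -> 'cV[R]_(m.*2.+1)) (g : M -> 'M[R]_(m.*2.+1))
    (nabla : (M -> 'rV[R]_(m.*2.+1)) -> (M -> 'rV[R]_(m.*2.+1)) -> (M -> 'rV[R]_(m.*2.+1))) :
  contact_riemannian A G rho br F xi eta g ->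
  levi_civita A G rho br g nabla ->
  (killing G rho br g xi <->
   forall s, G s -> nabla s xi = scales (cstf (-1)) (FE F s)).
Proof.
move=> [Hla Hac Hnw Hdeta] Hlc.
have span := vb_span (la_vb Hla).
have sym x := @Bfsym R _ (g x) (ac_g_sym Hac x).
have BfZr : forall x c v w, Bf (g x) v (c *: w) = c * Bf (g x) v w.
  by move=> x c v w; rewrite sym BfZl sym.
have BfDr : forall x u v w, Bf (g x) w (u + v) = Bf (g x) w u + Bf (g x) w v.
  by move=> x u v w; rewrite sym BfDl (sym x u) (sym x v).
have hxi := ac_xi_G Hac.
have F2 : forall s x, G s -> s x *m F x *m F x = -1 *: s x + etaE eta s x *: xi x.
  move=> s x hs; have := congr1 (fun f => f x) (ac_F2 Hac hs).
  by rewrite /FE /adds /scales /cstf /=.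
have exi : forall x, etaE eta xi x = 1.
  by move=> x; rewrite (ac_eta_xi Hac).
have xiF : forall x, xi x *m F x = 0.
  move=> x.
  have h1 : xi x *m F x *m F x = 0 by rewrite F2 // exi scaleN1r scale1r addNr.
  have [s0 [hs0 s0x]] := span x (xi x *m F x).
  have h2 := F2 s0 x hs0; rewrite s0x h1 mul0mx in h2.
  set c := etaE eta s0 x in h2.
  have hu : xi x *m F x = c *: xi x.
    move: h2; rewrite scaleN1r => /eqP; rewrite eq_sym addrC subr_eq0.
    by move/eqP=> ->.
  have hcc : (c * c) *: xi x = 0.
    by rewrite -scalerA -hu scalemxAl -hu h1.
  have : c * c = 0.
    have := congr1 (fun v => (v *m eta x) 0 0) hcc.
    have hz : forall a (B : 'M[R]_1), (a *: B) 0 0 = a * B 0 0 by move=> a B; rewrite mxE.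
    have e := exi x; rewrite /etaE in e.
    by rewrite /= -scalemxAl hz e mul0mx mxE mulr1.
  by move/eqP; rewrite mulf_eq0 orbb => /eqP c0; rewrite hu c0 scale0r.
have etaB : forall s, G s -> etaE eta s = gE g s xi.
  move=> s hs; apply: functional_extensionality => x.
  have := congr1 (fun f => f x) (ac_g_F Hac hs hxi).
  rewrite /= /gE /FE xiF trmx0 mulmx0 mxE exi mulr1 => /eqP.
  by rewrite eq_sym subr_eq0 => /eqP.
have tor : forall s1 s2 x, G s1 -> G s2 ->
    br s1 s2 x = nabla s1 s2 x + (-1) *: nabla s2 s1 x.
  move=> s1 s2 x h1 h2; have := congr1 (fun f => f x) (lc_torsion Hlc h1 h2).
  by rewrite /adds /scales /cstf /= => <-.
have met : forall s s1 s2 x, G s -> G s1 -> G s2 ->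
    rho s (gE g s1 s2) x = Bf (g x) (nabla s s1 x) (s2 x) + Bf (g x) (s1 x) (nabla s s2 x).
  move=> s s1 s2 x h h1 h2.
  by have := congr1 (fun f => f x) (lc_metric Hlc h h1 h2); rewrite /addf /= => ->.
have K : forall s1 s2 x, G s1 -> G s2 ->
    rho xi (gE g s1 s2) x - gE g (br xi s1) s2 x - gE g s1 (br xi s2) x
    = Bf (g x) (nabla s1 xi x) (s2 x) + Bf (g x) (s1 x) (nabla s2 xi x).
  move=> s1 s2 x h1 h2.
  rewrite met // -!/(Bf _ _ _) /gE -!/(Bf _ _ _) !tor //.
  rewrite BfDl BfDr BfZl BfZr; ring.
have D : forall s1 s2 x, G s1 -> G s2 ->
    2 * OmegaE F g s1 s2 x
    = Bf (g x) (s2 x) (nabla s1 xi x) - Bf (g x) (s1 x) (nabla s2 xi x).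
  move=> s1 s2 x h1 h2.
  have hb := la_br_G Hla h1 h2.
  rewrite -(Hdeta _ _ h1 h2) /dE (etaB _ h1) (etaB _ h2) (etaB _ hb) !met //.
  rewrite /gE -!/(Bf _ _ _) tor // BfDl BfZl.
  rewrite (sym x (nabla s1 s2 x)) (sym x (nabla s2 s1 x)); by field.
have skew : forall s1 s2 x, G s1 -> G s2 ->
    Bf (g x) (s1 x) (s2 x *m F x) = - Bf (g x) (s2 x) (s1 x *m F x).
  move=> s1 s2 x h1 h2.
  have := congr1 (fun f => f x) (Hdeta _ _ h1 h2).
  have := congr1 (fun f => f x) (Hdeta _ _ h2 h1).
  rewrite /OmegaE /gE /FE /= -!/(Bf _ _ _) => <- <-.
  rewrite /dE (la_br_skew Hla h1 h2).
  have -> : etaE eta (scales (cstf (-1)) (br s2 s1)) x = - etaE eta (br s2 s1) x.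
    by rewrite /etaE /scales /cstf -scalemxAl mxE mulN1r.
  ring.
split.
- move=> hK s1 h1; apply: functional_extensionality => x.
  set v := nabla s1 xi x + s1 x *m F x.
  have [s2 [h2 s2x]] := span x v.
  have e1 := hK s1 s2 h1 h2 x; rewrite K // in e1.
  have e2 := D s1 s2 x h1 h2.
  have e3 := skew s1 s2 x h1 h2.
  rewrite /OmegaE /gE /FE -/(Bf _ _ _) in e2.
  have hBv : Bf (g x) v v = 0.
    rewrite -{1}s2x /v BfDr.
    rewrite (sym x (nabla s1 xi x)) in e1. lra.
  have hv : v = 0.
    case: (eqVneq v 0) => // hne.
    by have := ac_g_pos Hac x hne; rewrite -/(Bf _ _ _) hBv ltxx.
  rewrite /scales /cstf /FE scaleN1r; apply/eqP; rewrite -addr_eq0; apply/eqP.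
  exact: hv.
- move=> hN s1 s2 h1 h2 x.
  rewrite K // (hN s1 h1) (hN s2 h2) /scales /cstf /FE !scaleN1r.
  rewrite BfNl (sym x (s1 x)) BfNl (sym x (s1 x *m F x)) skew //.
  by rewrite opprK (sym x (s2 x *m F x)) subrr.
Qed.
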